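(* Let $X>0$, $n\ge 1$, and let $A_0,A_1:\mathbb{R}\to\mathbb{C}^{n\times n}$ be $X$-periodic with $A_0,A_1\in L^2_{\rm per}([0,X])$ (entrywise). For $\lambda\in\mathbb{C}$ define on $L^2_{\rm per}([0,X];\mathbb{C}^n)$ the operators $$K_1 U=\partial_x(\partial_x^2-1)^{-1}(A_1U),\qquad K_0U=(\partial_x^2-1)^{-1}\big((A_0+(1-\lambda)I)U\big),$$ initially on trigonometric polynomials. Then $K=K_1+K_0$ extends to a Hilbert–Schmidt operator on $L^2_{\rm per}([0,X];\mathbb{C}^n)$.
   Context: $L^2_{\rm per}([0,X];\mathbb{C}^n)$ denotes the Hilbert space of $X$-periodic $\mathbb{C}^n$-valued functions square-integrable on $[0,X]$. $(\partial_x^2-1)^{-1}$ and $\partial_x(\partial_x^2-1)^{-1}$ are the Fourier multipliers acting on the $k$-th Fourier mode $e^{2\pi i kx/X}$ by $(-(2\pi k/X)^2-1)^{-1}$ and $(2\pi i k/X)(-(2\pi k/X)^2-1)^{-1}$ respectively. An operator $A$ on a separable Hilbert space is Hilbert–Schmidt if $\sum_{j,k}|\langle Ae_j,e_k\rangle|^2<\infty$ for an orthonormal basis $\{e_j\}$. *)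

(* Defs.v *)
From HB Require Import structures.
From mathcomp Require Import all_boot all_order all_algebra.
From mathcomp Require Import all_classical all_reals all_analysis.
From mathcomp Require Import complex.
Set Implicit Arguments. Unset Strict Implicit. Unset Printing Implicit Defensive.
Import Order.TTheory GRing.Theory Num.Theory.
Local Open Scope classical_set_scope.
Local Open Scope ring_scope.
Local Open Scope complex_scope.

Section Defs.
Variable R : realType.
Local Notation C := (R[i]).

Definition csqnorm (z : C) : R := complex.Re z ^+ 2 + complex.Im z ^+ 2.

Definition cint (X : R) (f : R -> C) : C :=
  Complex (Rintegral lebesgue_measure `[0, X] (fun x => complex.Re (f x)))
          (Rintegral lebesgue_measure `[0, X] (fun x => complex.Im (f x))).

Definition expi (t : R) : C := Complex (cos t) (sin t).

Definition periodic (T : Type) (X : R) (f : R -> T) := forall x, f (x + X) = f x.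

Definition L2_on (X : R) (a : R -> C) :=
  measurable_fun `[0, X] (fun x => complex.Re (a x)) /\
  measurable_fun `[0, X] (fun x => complex.Im (a x)) /\
  (lebesgue_measure.-integrable `[0, X] (fun x => (csqnorm (a x))%:E)).

Definition L2per_mx (n : nat) (X : R) (A : R -> 'M[C]_n) :=
  periodic X A /\ forall i j, L2_on X (fun x => A x i j).

Definition cinner (n : nat) (X : R) (U V : R -> 'cV[C]_n) : C :=
  cint X (fun x => \sum_(l < n) U x l ord0 * conjc (V x l ord0)).

Definition fmode (n : nat) (X : R) (k : int) (i : 'I_n) : R -> 'cV[C]_n :=
  fun x => \col_(l < n)
    (if l == i then ((Num.sqrt X)^-1)%:C * expi (2 * pi * k%:~R * x / X) else 0).

Definition freq (X : R) (k : int) : R := 2 * pi * k%:~R / X.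

(* symbol of (d_x^2 - 1)^{-1} on mode k *)
Definition sym0 (X : R) (k : int) : C := ((- (freq X k) ^+ 2 - 1)^-1)%:C.
(* symbol of d_x (d_x^2 - 1)^{-1} on mode k *)
Definition sym1 (X : R) (k : int) : C :=
  Complex 0 (freq X k) * ((- (freq X k) ^+ 2 - 1)^-1)%:C.

(* The Fourier multiplier with symbol m is defined on L^2 by
   <M W, e_{k,l}> = m k * <W, e_{k,l}>.  Hence the (k,l)-th Fourier coefficient
   of K U = d_x (d_x^2-1)^{-1}(A1 U) + (d_x^2-1)^{-1}((A0 + (1-lam) I) U) is: *)
Definition Kcoef (n : nat) (X : R) (lam : C) (A0 A1 : R -> 'M[C]_n)
    (U : R -> 'cV[C]_n) (k : int) (l : 'I_n) : C :=
  sym1 X k * cinner X (fun x => A1 x *m U x) (fmode X k l)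
  + sym0 X k * cinner X (fun x => (A0 x + (1 - lam)%:M) *m U x) (fmode X k l).

(* Hilbert-Schmidt: sum over the orthonormal basis {e_j} of |<K e_j, e_m>|^2 < oo *)
Definition K_hilbert_schmidt (n : nat) (X : R) (lam : C) (A0 A1 : R -> 'M[C]_n) :=
  (\esum_(p in [set: ((int * 'I_n) * (int * 'I_n))%type])
     (csqnorm (Kcoef X lam A0 A1 (fmode X p.1.1 p.1.2) p.2.1 p.2.2))%:E < +oo)%E.

End Defs.

(* Main.v *)
Require Import Defs.
From HB Require Import structures.
From mathcomp Require Import all_boot all_order all_algebra.
From mathcomp Require Import all_classical all_reals all_analysis.
From mathcomp Require Import complex.
From mathcomp Require Import ring lra.
Set Implicit Arguments. Unset Strict Implicit. Unset Printing Implicit Defensive.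
Import Order.TTheory GRing.Theory Num.Theory.
Import numFieldNormedType.Exports.
Local Open Scope classical_set_scope.
Local Open Scope ring_scope.

Section Basic.
Variable R : realType.
Variable X : R.
Hypothesis hX : 0 < X.
Local Notation mu := (@lebesgue_measure R).
Local Notation D := (`[0, X]%classic : set R).

Definition Int (f : R -> R) := mu.-integrable D (EFin \o f).
Definition L2 (f : R -> R) := measurable_fun D f /\ Int (fun x => f x ^+ 2).
Definition II (f : R -> R) := Rintegral mu D f.

Lemma mD : measurable (D : set (measurableTypeR R)). Proof. exact: measurable_itv. Qed.

Lemma muD : mu D = X%:E.
Proof. by rewrite lebesgue_measure_itv/= lte_fin hX -EFinB subr0. Qed.

Lemma bounded_le (f : R -> R) (M : R) : (forall x, D x -> `|f x| <= M) ->
  [bounded f x | x in D].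
Proof.
move=> fM; rewrite /bounded_near; near=> M'; move=> x Dx /=.
apply: (le_trans (fM x Dx)); near: M'; exact: nbhs_pinfty_ge (num_real M).
Unshelve. all: end_near.
Qed.

Lemma Int_bounded (f : R -> R) (M : R) : measurable_fun D f -> (forall x, D x -> `|f x| <= M) -> Int f.
Proof.
move=> mf fM; have := @measurable_bounded_integrable _ _ _ mu f D mD.
apply => //; [have := @lebesgue_measure_itv R `[0, X]; rewrite /= lte_fin hX -EFinB subr0 => -> ; exact: ltry | exact: bounded_le fM].
Qed.

Lemma Int_cst k : Int (fun=> k).
Proof. apply: (@Int_bounded _ `|k|) => //. Qed.


Lemma Int_add (f g : R -> R) : Int f -> Int g -> Int (fun x => f x + g x).
Proof.
move=> If Ig; apply: (eq_integrable mD _ _ _ (integrableD mD If Ig)).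
by move=> x _; rewrite /= EFinD.
Qed.

Lemma Int_scale (c : R) (f : R -> R) : Int f -> Int (fun x => c * f x).
Proof.
move=> If; apply: (eq_integrable mD _ _ _ (integrableZl mD c If)).
by move=> x _; rewrite /= EFinM.
Qed.

Lemma Int_le (f g : R -> R) : measurable_fun D f ->
  (forall x, D x -> `|f x| <= `|g x|) -> Int g -> Int f.
Proof.
move=> mf fg Ig; apply: (le_integrable mD _ _ Ig).
  exact/measurable_realfun.measurable_EFinP.
by move=> x Dx /=; rewrite lee_fin fg.
Qed.

Lemma L2_Int2 (f g : R -> R) : L2 f -> L2 g -> Int (fun x => f x * g x).
Proof.
move=> [mf If] [mg Ig].
apply: (@Int_le _ (fun x => f x ^+ 2 + g x ^+ 2)); first exact: measurable_realfun.measurable_funM.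
  move=> x _; rewrite [X in _ <= X]ger0_norm ?addr_ge0 ?sqr_ge0 //.
  rewrite normrM; have := sqr_ge0 (`|f x| - `|g x|).
  rewrite -[f x ^+ 2]real_normK ?num_real // -[g x ^+ 2]real_normK ?num_real //.
  rewrite sqrrB; have := mulr_ge0 (normr_ge0 (f x)) (normr_ge0 (g x)).
  move: (`|f x|) (`|g x|) => a b; rewrite -mulr_natr; lra.
exact: Int_add.
Qed.

Lemma L2_cst k : L2 (fun=> k).
Proof. split; [exact: measurable_cst | exact: Int_cst]. Qed.

Lemma L2_Int (f : R -> R) : L2 f -> Int f.
Proof.
move=> Lf; apply: (eq_integrable mD _ _ _ (L2_Int2 Lf (L2_cst 1))).
by move=> x _; rewrite /= mulr1.
Qed.

Lemma L2_add (f g : R -> R) : L2 f -> L2 g -> L2 (fun x => f x + g x).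
Proof.
move=> Lf Lg; split; first exact: measurable_realfun.measurable_funD Lf.1 Lg.1.
have I2 := L2_Int2 Lf Lg.
apply: (eq_integrable mD _ _ _ (Int_add (Int_add Lf.2 Lg.2) (Int_scale 2 I2))).
by move=> x _ /=; congr (_%:E); ring.
Qed.

Lemma L2_scale (c : R) (f : R -> R) : L2 f -> L2 (fun x => c * f x).
Proof.
move=> Lf; split; first exact: measurable_realfun.measurable_funM (measurable_cst _) Lf.1.
apply: (eq_integrable mD _ _ _ (Int_scale (c ^+ 2) Lf.2)).
by move=> x _ /=; congr (_%:E); ring.
Qed.

Lemma L2_bounded (f : R -> R) (M : R) : measurable_fun D f ->
  (forall x, D x -> `|f x| <= M) -> L2 f.
Proof.
move=> mf fM; split => //; apply: (@Int_bounded _ (M ^+ 2)).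
  exact: measurable_realfun.measurable_funM.
move=> x Dx; rewrite normrX lerXn2r ?nnegrE //; last exact: fM.
exact: le_trans (fM x Dx).
Qed.

End Basic.

Section Trig.
Variable R : realType.
Variable X : R.
Hypothesis hX : 0 < X.
Local Notation D := (`[0, X]%classic : set R).

Lemma der_cont (f df : R -> R) : (forall x : R, is_derive x (1:R) f (df x)) -> continuous f.
Proof.
move=> h x; apply: differentiable_continuous; apply/derivable1_diffP.
exact: ex_derive.
Qed.

Lemma FTC_X (f F : R -> R) : (forall x : R, is_derive x (1:R) F (f x)) -> continuous f ->
  II X f = F X - F 0.
Proof.
move=> dF cf; have cF := der_cont dF.
rewrite /II /Rintegral (@continuous_FTC2 R f F 0 X hX) /=.
- by [].
- exact: continuous_subspaceT.
- split.
  + by move=> x _; exact: ex_derive.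
  + exact: cvg_at_right_filter (cF 0).
  + exact: cvg_at_left_filter (cF X).
- by move=> x _; rewrite derive1E; exact: derive_val.
Qed.

Lemma dsin (t x : R) : is_derive x 1 (fun y => sin (t * y)) (cos (t * x) * t).
Proof.
have h1 : is_derive x 1 (t *: (@id R)) (t *: 1) by exact: is_deriveZ.
have h2 := @is_derive1_comp R sin (t *: (@id R)) x (cos (t * x)) (t *: 1) (is_derive_sin _) h1.
have e1 : t%:A = t :> R by rewrite /GRing.scale/= mulr1.
rewrite e1 in h2. exact h2.
Qed.

Lemma dcos (t x : R) : is_derive x 1 (fun y => cos (t * y)) (- sin (t * x) * t).
Proof.
have h1 : is_derive x 1 (t *: (@id R)) (t *: 1) by exact: is_deriveZ.
have h2 := @is_derive1_comp R cos (t *: (@id R)) x (- sin (t * x)) (t *: 1) (is_derive_cos _) h1.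
have e1 : t%:A = t :> R by rewrite /GRing.scale/= mulr1.
rewrite e1 in h2. exact h2.
Qed.

Lemma int_cos (t : R) : t != 0 -> II X (fun x => cos (t * x)) = t^-1 * sin (t * X).
Proof.
move=> t0.
have dF : forall x : R, is_derive x (1:R) (fun y => t^-1 * sin (t * y)) (cos (t * x)).
  move=> x; have h := is_deriveZ (t^-1) (dsin t x).
  have -> : cos (t * x) = t^-1 *: (cos (t * x) * t) by rewrite /GRing.scale/=; field.
  exact: h.
rewrite (FTC_X dF); last exact: der_cont (dcos t).
by rewrite mulr0 sin0 mulr0 subr0.
Qed.

Lemma int_sin (t : R) : t != 0 -> II X (fun x => sin (t * x)) = t^-1 * (1 - cos (t * X)).
Proof.
move=> t0.
have dF : forall x : R, is_derive x (1:R) (fun y => - t^-1 * cos (t * y)) (sin (t * x)).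
  move=> x; have h := is_deriveZ (- t^-1) (dcos t x).
  have -> : sin (t * x) = (- t^-1) *: (- sin (t * x) * t) by rewrite /GRing.scale/=; field.
  exact: h.
rewrite (FTC_X dF); last exact: der_cont (dsin t).
rewrite mulr0 cos0 mulr1; ring.
Qed.

End Trig.

Section Orth.
Variable R : realType.
Variable X : R.
Hypothesis hX : 0 < X.
Local Notation D := (`[0, X]%classic : set R).

Definition th (d : int) : R := 2 * pi * d%:~R / X.

Lemma sincos_2pin (n : nat) : sin (2 * pi * n%:R) = 0 :> R /\ cos (2 * pi * n%:R) = 1 :> R.
Proof.
have -> : 2 * pi * n%:R = 0 + pi *+ 2 *+ n :> R.
  rewrite add0r -mulrnA -mulr_natr -[in RHS]mulr_natr mulrC.
  by rewrite natrM mul1r; ring.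
by rewrite (periodicn (@sinD2pi R)) (periodicn (@cosD2pi R)) sin0 cos0.
Qed.

Lemma sincos_2pid (d : int) : sin (th d * X) = 0 /\ cos (th d * X) = 1.
Proof.
have -> : th d * X = 2 * pi * d%:~R by rewrite /th mulfVK // gt_eqF.
case: d => n; first exact: sincos_2pin.
rewrite NegzE rmorphN /= mulrN sinN cosN.
by have [-> ->] := sincos_2pin n.+1; rewrite oppr0.
Qed.

Lemma th_neq0 d : d != 0 -> th d != 0.
Proof.
move=> d0; rewrite /th; apply: mulf_neq0; last by rewrite invr_eq0 gt_eqF.
apply: mulf_neq0; last by rewrite intr_eq0.
by rewrite mulf_neq0 ?pnatr_eq0 ?gt_eqF ?pi_gt0.
Qed.

Lemma th0 : th 0 = 0. Proof. by rewrite /th mulr0 mul0r. Qed.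

Lemma int_cos_th d : II X (fun x => cos (th d * x)) = if d == 0 then X else 0.
Proof.
have [->|d0] := eqVneq d 0.
  rewrite /II th0 (_ : (fun x => cos (0 * x)) = fun=> 1); last first.
    by apply/funext => x; rewrite mul0r cos0.
  rewrite Rintegral_cst; last exact: mD.
  have := @lebesgue_measure_itv R `[0, X]; rewrite /= lte_fin hX -EFinB subr0 => ->.
  by rewrite mul1r.
by rewrite int_cos ?th_neq0 // (sincos_2pid d).1 mulr0.
Qed.

Lemma int_sin_th d : II X (fun x => sin (th d * x)) = 0.
Proof.
have [->|d0] := eqVneq d 0.
  rewrite /II th0 (_ : (fun x => sin (0 * x)) = fun=> 0); last first.
    by apply/funext => x; rewrite mul0r sin0.
  by rewrite Rintegral_cst ?mul0r //; exact: mD.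
by rewrite int_sin ?th_neq0 // (sincos_2pid d).2 subrr mulr0.
Qed.

Lemma meas_cos_th d : measurable_fun D (fun x => cos (th d * x)).
Proof.
have -> : (fun x => cos (th d * x)) = cos \o ( *%R^~ (th d)).
  by apply/funext => x /=; rewrite mulrC.
apply: measurableT_comp; last exact: measurable_realfun.mulrr_measurable.
exact: (measurable_realfun.continuous_measurable_fun (@continuous_cos R)).
Qed.

Lemma meas_sin_th d : measurable_fun D (fun x => sin (th d * x)).
Proof.
have -> : (fun x => sin (th d * x)) = sin \o ( *%R^~ (th d)).
  by apply/funext => x /=; rewrite mulrC.
apply: measurableT_comp; last exact: measurable_realfun.mulrr_measurable.
exact: (measurable_realfun.continuous_measurable_fun (@continuous_sin R)).
Qed.

Lemma L2_cos_th d : L2 X (fun x => cos (th d * x)).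
Proof. apply: (L2_bounded hX (meas_cos_th d)) => x _; exact: cos_max. Qed.

Lemma L2_sin_th d : L2 X (fun x => sin (th d * x)).
Proof. apply: (L2_bounded hX (meas_sin_th d)) => x _; exact: sin_max. Qed.

End Orth.

Section Lin.
Variable R : realType.
Variable X : R.
Hypothesis hX : 0 < X.
Local Notation D := (`[0, X]%classic : set R).

Lemma II_add (f g : R -> R) : Int X f -> Int X g ->
  II X (fun x => f x + g x) = II X f + II X g.
Proof. by move=> If Ig; rewrite /II RintegralD //; exact: mD. Qed.

Lemma II_sub (f g : R -> R) : Int X f -> Int X g ->
  II X (fun x => f x - g x) = II X f - II X g.
Proof. by move=> If Ig; rewrite /II RintegralB //; exact: mD. Qed.

Lemma II_scale (k : R) (f : R -> R) : Int X f ->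
  II X (fun x => k * f x) = k * II X f.
Proof. by move=> If; rewrite /II RintegralZl //; exact: mD. Qed.

Lemma II_ext (f g : R -> R) : (forall x, f x = g x) -> II X f = II X g.
Proof. by move=> fg; congr II; apply/funext. Qed.

Lemma Int_sum (I : Type) (s : seq I) (F : I -> R -> R) :
  (forall i, Int X (F i)) -> Int X (fun x => \sum_(i <- s) F i x).
Proof.
move=> IF; elim: s => [|i s ih].
  have := Int_cst hX 0; apply: (eq_integrable (mD X)) => x _.
  by rewrite /= big_nil.
have := Int_add (IF i) ih; apply: (eq_integrable (mD X)) => x _.
by rewrite /= big_cons.
Qed.

Lemma II_sum (I : Type) (s : seq I) (F : I -> R -> R) :
  (forall i, Int X (F i)) ->
  II X (fun x => \sum_(i <- s) F i x) = \sum_(i <- s) II X (F i).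
Proof.
move=> IF; elim: s => [|i s ih].
  rewrite big_nil (II_ext (g := fun=> 0)); last by move=> x; rewrite big_nil.
  by rewrite /II Rintegral_cst ?mul0r //; exact: mD.
rewrite big_cons (II_ext (g := fun x => F i x + \sum_(j <- s) F j x)); last first.
  by move=> x; rewrite big_cons.
by rewrite II_add ?ih //; exact: Int_sum.
Qed.

Lemma L2_sum (I : Type) (s : seq I) (F : I -> R -> R) :
  (forall i, L2 X (F i)) -> L2 X (fun x => \sum_(i <- s) F i x).
Proof.
move=> LF; elim: s => [|i s ih].
  have -> : (fun x => \sum_(i <- [::]) F i x) = fun=> 0.
    by apply/funext => x; rewrite big_nil.
  exact: L2_cst hX 0.
have -> : (fun x => \sum_(j <- i :: s) F j x) = fun x => F i x + \sum_(j <- s) F j x.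
  by apply/funext => x; rewrite big_cons.
exact: L2_add.
Qed.

End Lin.

Section Bessel.
Variable R : realType.
Variable X : R.
Hypothesis hX : 0 < X.
Variables a b : R -> R.
Hypothesis La : L2 X a.
Hypothesis Lb : L2 X b.

Let c d x := cos (th X d * x).
Let s d x := sin (th X d * x).
Definition Pc d := II X (fun x => a x * cos (th X d * x) + b x * sin (th X d * x)).
Definition Qc d := II X (fun x => b x * cos (th X d * x) - a x * sin (th X d * x)).

Let Lc d : L2 X (c d). Proof. exact: L2_cos_th. Qed.
Let Ls d : L2 X (s d). Proof. exact: L2_sin_th. Qed.

Lemma th_sub j k : th X (j - k) = th X j - th X k.
Proof. by rewrite /th rmorphB /=; ring. Qed.

Lemma big_delta (r : seq int) (j : int) (F : int -> R) : uniq r -> j \in r ->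
  \sum_(k <- r) (if j - k == 0 then F k else 0) = F j.
Proof.
move=> ur jr; rewrite (bigD1_seq j) //= subrr eqxx big1_seq ?addr0 //.
by move=> k /andP[kj _]; rewrite subr_eq0 eq_sym (negbTE kj).
Qed.

Lemma bessel (r : seq int) : uniq r ->
  \sum_(j <- r) (Pc j ^+ 2 + Qc j ^+ 2) <= X * II X (fun x => a x ^+ 2 + b x ^+ 2).
Proof.
move=> ur.
set T := \sum_(j <- r) _.
pose gr x := \sum_(j <- r) (Pc j * c j x - Qc j * s j x).
pose gi x := \sum_(j <- r) (Pc j * s j x + Qc j * c j x).
have Lgr : L2 X gr.
  apply: (L2_sum hX) => j; apply: L2_add; first exact: L2_scale.
  have -> : (fun x => - (Qc j * s j x)) = fun x => (- Qc j) * s j x.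
    by apply/funext => x; rewrite mulNr.
  exact: L2_scale.
have Lgi : L2 X gi.
  by apply: (L2_sum hX) => j; apply: L2_add; exact: L2_scale.
have IP j : Int X (fun x => a x * c j x + b x * s j x).
  by apply: Int_add; exact: L2_Int2.
have IQ j : Int X (fun x => b x * c j x - a x * s j x).
  apply: Int_add; first exact: L2_Int2.
  have := Int_scale (-1) (L2_Int2 La (Ls j)); apply: (eq_integrable (mD X)) => x _.
  by rewrite /= mulN1r.
have K1 : II X (fun x => a x * gr x + b x * gi x) = T.
  rewrite (@II_ext _ X _ (fun x => \sum_(j <- r)
     (Pc j * (a x * c j x + b x * s j x) + Qc j * (b x * c j x - a x * s j x)))); last first.
    move=> x; rewrite /gr /gi !mulr_sumr -big_split /=; apply: eq_bigr => j _; ring.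
  rewrite (II_sum hX); last by move=> j; apply: Int_add; apply: Int_scale.
  apply: eq_bigr => j _; rewrite II_add ?II_scale //; try exact: Int_scale.
have K2 : II X (fun x => gr x ^+ 2 + gi x ^+ 2) = X * T.
  rewrite (@II_ext _ X _ (fun x => \sum_(j <- r) \sum_(k <- r)
     ((Pc j * Pc k + Qc j * Qc k) * c (j - k) x + (Pc j * Qc k - Qc j * Pc k) * s (j - k) x))); last first.
    move=> x; rewrite /gr /gi !expr2 !big_distrlr /= -big_split /=.
    apply: eq_bigr => j _; rewrite -big_split /=; apply: eq_bigr => k _.
    rewrite /c /s th_sub.
    have -> : (th X j - th X k) * x = th X j * x - th X k * x by ring.
    rewrite cosB sinB; ring.
  rewrite (II_sum hX); last first.
    move=> j; apply: (Int_sum hX) => k; apply: Int_add; apply: Int_scale; exact: (L2_Int hX).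
  rewrite /T big_distrr /=; apply: eq_big_seq => j jr.
  rewrite (II_sum hX); last first.
    move=> k; apply: Int_add; apply: Int_scale; exact: (L2_Int hX).
  rewrite (eq_bigr (fun k => if j - k == 0 then X * (Pc k * Pc j + Qc k * Qc j) else 0)); last first.
    move=> k _; rewrite II_add; try (apply: Int_scale; exact: L2_Int).
    rewrite !II_scale; try exact: (L2_Int hX).
    rewrite /c /s int_cos_th // int_sin_th // mulr0 addr0.
    case: eqP => [/eqP|_]; last by rewrite mulr0.
    by rewrite subr_eq0 => /eqP ->; rewrite mulrC.
  by rewrite big_delta.
have F0 : 0 <= II X (fun x => (X * a x - gr x) ^+ 2 + (X * b x - gi x) ^+ 2).
  by apply: Rintegral_ge0 => x _; rewrite addr_ge0 ?sqr_ge0.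
rewrite (@II_ext _ X _ (fun x => (X ^+ 2 * (a x ^+ 2 + b x ^+ 2) - 2 * X * (a x * gr x + b x * gi x))
    + (gr x ^+ 2 + gi x ^+ 2))) in F0; last by move=> x; ring.
have Iab : Int X (fun x => a x ^+ 2 + b x ^+ 2) by apply: Int_add; [exact: La.2 | exact: Lb.2].
have I1 : Int X (fun x => X ^+ 2 * (a x ^+ 2 + b x ^+ 2)) := Int_scale _ Iab.
have Ig : Int X (fun x => a x * gr x + b x * gi x).
  by apply: Int_add; exact: L2_Int2.
have I2 : Int X (fun x => 2 * X * (a x * gr x + b x * gi x)) := Int_scale _ Ig.
have I3 : Int X (fun x => gr x ^+ 2 + gi x ^+ 2) := Int_add Lgr.2 Lgi.2.
have Isub : Int X (fun x => X ^+ 2 * (a x ^+ 2 + b x ^+ 2) - 2 * X * (a x * gr x + b x * gi x)).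
  have := Int_add I1 (Int_scale (-1) I2); apply: (eq_integrable (mD X)) => x _.
  by rewrite /= mulN1r.
rewrite (II_add Isub I3) (II_sub I1 I2) (II_scale _ Iab) (II_scale _ Ig) K1 K2 in F0.
have : X * T <= X * (X * II X (fun x => a x ^+ 2 + b x ^+ 2)).
  move: F0; set F := II X _; move=> F0.
  have e : X ^+ 2 * F - 2 * X * T + X * T = X * (X * F) - X * T by ring.
  rewrite e subr_ge0 in F0; exact: F0.
by rewrite ler_pM2l.
Qed.

End Bessel.

Section Cx.
Variable R : realType.
Variable X : R.
Hypothesis hX : 0 < X.
Variable n : nat.
Local Notation C := (R[i]).
Local Open Scope complex_scope.

Lemma cmulE (a b c d : R) : (Complex a b) * (Complex c d) = Complex (a*c - b*d) (a*d + b*c) :> C.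
Proof. by []. Qed.

Lemma ang_th (k : int) (x : R) : 2 * pi * k%:~R * x / X = th X k * x.
Proof. by rewrite /th mulrAC. Qed.

Lemma integrand_eq (M : 'M[C]_n) (x : R) k i m l :
  \sum_(l0 < n) (M *m fmode X k i x) l0 ord0 * conjc (fmode X m l x l0 ord0) =
  Complex (X^-1 * (complex.Re (M l i) * cos (th X (m - k) * x) + complex.Im (M l i) * sin (th X (m - k) * x)))
          (X^-1 * (complex.Im (M l i) * cos (th X (m - k) * x) - complex.Re (M l i) * sin (th X (m - k) * x))).
Proof.
rewrite (bigD1 l) //= big1 ?addr0; last first.
  by move=> l0 /negbTE nl; rewrite [fmode _ _ _ _ _ _]mxE nl conjc0 mulr0.
rewrite !mxE eqxx (bigD1 i) //= big1 ?addr0; last first.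
  by move=> j /negbTE ji; rewrite mxE ji mulr0.
rewrite mxE eqxx !ang_th.
move: (M l i) => [p q].
set s := (Num.sqrt X)^-1.
have ss : s * s = X^-1 by rewrite -invrM ?unitfE ?sqrtr_eq0 -?ltNge // -expr2 sqr_sqrtr // ltW.
rewrite th_sub.
have -> : (th X m - th X k) * x = th X m * x - th X k * x by ring.
rewrite cosB sinB /expi -ss /=.
rewrite !cmulE /=.
by apply/eqP; rewrite eq_complex /=; apply/andP; split; apply/eqP; ring.
Qed.


Lemma L2_of_on (z : R -> C) : L2_on X z ->
  L2 X (fun x => complex.Re (z x)) /\ L2 X (fun x => complex.Im (z x)).
Proof.
move=> [mre [mim Iz]].
split; split => //; apply: (@Int_le _ _ _ (fun x => csqnorm (z x))) => //;
  try exact: measurable_realfun.measurable_funM.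
- move=> x _; rewrite /csqnorm !ger0_norm ?addr_ge0 ?sqr_ge0 //.
  by rewrite lerDl sqr_ge0.
- move=> x _; rewrite /csqnorm !ger0_norm ?addr_ge0 ?sqr_ge0 //.
  by rewrite lerDr sqr_ge0.
Qed.

Lemma cinner_fmode (M : R -> 'M[C]_n) k i m l :
  L2 X (fun x => complex.Re (M x l i)) -> L2 X (fun x => complex.Im (M x l i)) ->
  cinner X (fun x => M x *m fmode X k i x) (fmode X m l) =
  Complex (X^-1 * Pc X (fun x => complex.Re (M x l i)) (fun x => complex.Im (M x l i)) (m - k))
          (X^-1 * Qc X (fun x => complex.Re (M x l i)) (fun x => complex.Im (M x l i)) (m - k)).
Proof.
move=> La Lb; rewrite /cint; congr Complex.
  rewrite /Pc -II_scale; last first.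
    by apply: Int_add; apply: L2_Int2 => //; [exact: L2_cos_th | exact: L2_sin_th].
  by apply: II_ext => x /=; rewrite integrand_eq.
rewrite /Qc -II_scale; last first.
  apply: Int_add; first by apply: L2_Int2 => //; exact: L2_cos_th.
  have := Int_scale (-1) (L2_Int2 La (L2_sin_th hX (m - k))).
  by apply: (eq_integrable (mD X)) => x _; rewrite /= mulN1r.
by apply: II_ext => x /=; rewrite integrand_eq.
Qed.

End Cx.

Section Sym.
Variable R : realType.
Local Notation C := (R[i]).
Local Open Scope complex_scope.

Definition wt (X : R) (m : int) : R := (1 + freq X m ^+ 2)^-1.

Lemma wt_ge0 X m : 0 <= wt X m.
Proof. by rewrite /wt invr_ge0 addr_ge0 ?sqr_ge0. Qed.

Lemma csq_ge0 (z : C) : 0 <= csqnorm z.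
Proof. by rewrite /csqnorm addr_ge0 ?sqr_ge0. Qed.

Lemma csq_sym1 X m : csqnorm (sym1 X m) <= wt X m.
Proof.
rewrite /csqnorm /sym1 /wt /=.
set f := freq X m; set q := 1 + f ^+ 2.
have q0 : 0 < q by rewrite /q ltr_pwDl ?sqr_ge0.
have -> : (- f ^+ 2 - 1) = - q by rewrite /q opprD addrC.
rewrite invrN.
have -> : (0 * - q^-1 - f * 0) ^+ 2 + (0 * 0 + f * - q^-1) ^+ 2 = q^-1 * (f ^+ 2 / q).
  by rewrite !(mul0r, mulr0, subr0, add0r); rewrite sqrrN expr2 expr2; field; rewrite gt_eqF.
rewrite -[leRHS]mulr1; apply: ler_wpM2l; first by rewrite invr_ge0 ltW.
by rewrite ler_pdivrMr // mul1r /q; lra.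
Qed.

Lemma csq_sym0 X m : csqnorm (sym0 X m) <= wt X m.
Proof.
rewrite /csqnorm /sym0 /wt /=.
set f := freq X m; set q := 1 + f ^+ 2.
have q1 : 1 <= q by rewrite /q lerDl sqr_ge0.
have q0 : 0 < q by rewrite (lt_le_trans ltr01).
have -> : (- f ^+ 2 - 1) = - q by rewrite /q opprD addrC.
rewrite invrN expr0n /= addr0 sqrrN expr2.
rewrite -[leRHS]mulr1; apply: ler_wpM2l; first by rewrite invr_ge0 ltW.
by rewrite invf_le1.
Qed.

Lemma csq_bound (s1 s0 : C) (p1 q1 p0 q0 ww : R) :
  csqnorm s1 <= ww -> csqnorm s0 <= ww ->
  csqnorm (s1 * Complex p1 q1 + s0 * Complex p0 q0) <=
  2 * ww * (p1 ^+ 2 + q1 ^+ 2 + (p0 ^+ 2 + q0 ^+ 2)).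
Proof.
case: s1 => u1 v1; case: s0 => u0 v0; rewrite /csqnorm /= => h1 h0.
set A := u1 * p1 - v1 * q1; set B := u1 * q1 + v1 * p1.
set A' := u0 * p0 - v0 * q0; set B' := u0 * q0 + v0 * p0.
have e1 : A ^+ 2 + B ^+ 2 = (u1 ^+ 2 + v1 ^+ 2) * (p1 ^+ 2 + q1 ^+ 2) by rewrite /A /B; ring.
have e0 : A' ^+ 2 + B' ^+ 2 = (u0 ^+ 2 + v0 ^+ 2) * (p0 ^+ 2 + q0 ^+ 2) by rewrite /A' /B'; ring.
have g1 : (u1 ^+ 2 + v1 ^+ 2) * (p1 ^+ 2 + q1 ^+ 2) <= ww * (p1 ^+ 2 + q1 ^+ 2).
  by rewrite ler_wpM2r ?addr_ge0 ?sqr_ge0.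
have g0 : (u0 ^+ 2 + v0 ^+ 2) * (p0 ^+ 2 + q0 ^+ 2) <= ww * (p0 ^+ 2 + q0 ^+ 2).
  by rewrite ler_wpM2r ?addr_ge0 ?sqr_ge0.
have hA := sqr_ge0 (A - A'); have hB := sqr_ge0 (B - B').
have ex : (A + A') ^+ 2 + (B + B') ^+ 2 + ((A - A') ^+ 2 + (B - B') ^+ 2) =
   2 * (A ^+ 2 + B ^+ 2) + 2 * (A' ^+ 2 + B' ^+ 2) by ring.
have -> : 2 * ww * (p1 ^+ 2 + q1 ^+ 2 + (p0 ^+ 2 + q0 ^+ 2)) =
   2 * (ww * (p1 ^+ 2 + q1 ^+ 2)) + 2 * (ww * (p0 ^+ 2 + q0 ^+ 2)) by ring.
move: ex hA hB g1 g0; rewrite e1 e0.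
move: ((A + A') ^+ 2 + (B + B') ^+ 2) ((A - A') ^+ 2) ((B - B') ^+ 2).
move: ((u1 ^+ 2 + v1 ^+ 2) * (p1 ^+ 2 + q1 ^+ 2)) ((u0 ^+ 2 + v0 ^+ 2) * (p0 ^+ 2 + q0 ^+ 2)).
move: (ww * (p1 ^+ 2 + q1 ^+ 2)) (ww * (p0 ^+ 2 + q0 ^+ 2)).
move=> W1 W0 Z1 Z0 S T1 T2; lra.
Qed.

End Sym.

Section Weights.
Variable R : realType.
Variable X : R.
Hypothesis hX : 0 < X.

Definition rng (N : nat) : seq int := map Posz (iota 0 N.+1) ++ map (fun x => Negz x) (iota 0 N).

Lemma rng_uniq N : uniq (rng N).
Proof.
rewrite /rng cat_uniq; apply/and3P; split.
- by rewrite map_inj_uniq ?iota_uniq // => x y [].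
- by apply/hasPn => x /mapP[y _ ->]; apply/mapP => -[z _].
- by rewrite map_inj_uniq ?iota_uniq // => x y [].
Qed.

Lemma rng_mem N (k : int) : (`|k| <= N)%N -> k \in rng N.
Proof.
rewrite /rng mem_cat; case: k => x hx.
  apply/orP; left; apply: (map_f Posz); rewrite mem_iota add0n ltnS; exact: hx.
apply/orP; right; apply: (map_f (fun x => Negz x)); rewrite mem_iota add0n; exact: hx.
Qed.

Let c : R := (2 * pi / X) ^+ 2.
Let c0 : 0 < c.
Proof. by rewrite /c exprn_gt0 // divr_gt0 // mulr_gt0 // pi_gt0. Qed.

Lemma wt_nat (N : nat) : wt X (Posz N) = (1 + c * N%:R ^+ 2)^-1.
Proof. by rewrite /wt /freq /c; congr (_^-1); ring. Qed.

Lemma wt_neg (N : nat) : wt X (Negz N) = wt X (Posz N.+1).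
Proof. by rewrite /wt /freq NegzE rmorphN /= mulrN mulNr sqrrN. Qed.

Lemma wt_step (N : nat) : wt X (Posz N.+1) <= 2 / (c * N.+1%:R) - 2 / (c * N.+2%:R).
Proof.
rewrite wt_nat; set n := N.+1%:R.
have n1 : 1 <= n by rewrite /n ler1n.
have n0 : 0 < n by rewrite (lt_le_trans ltr01).
have -> : N.+2%:R = n + 1 :> R by rewrite /n -natr1.
have -> : 2 / (c * n) - 2 / (c * (n + 1)) = 2 / (c * n * (n + 1)).
  have hN : 0 <= N%:R :> R by [].
  field; apply/and3P; split; rewrite gt_eqF //; lra.
rewrite -[(1 + c * n ^+ 2)^-1]div1r ler_pdivrMr; last by rewrite addr_gt0 // mulr_gt0 // exprn_gt0.
rewrite mulrAC ler_pdivlMr; last by apply: mulr_gt0; [exact: mulr_gt0 | exact: addr_gt0].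
have h : 0 <= c * n * (n - 1) by apply: mulr_ge0; [apply: mulr_ge0; exact: ltW | rewrite subr_ge0].
rewrite mul1r; lra.
Qed.

Lemma wt_tail (N : nat) : \sum_(0 <= x < N) wt X (Posz x.+1) <= 2 / c - 2 / (c * N.+1%:R).
Proof.
elim: N => [|N ih].
  by rewrite big_geq // mulr1 subrr.
rewrite big_nat_recr //=.
apply: le_trans (lerD ih (wt_step N)) _.
by rewrite addrA subrK.
Qed.

Lemma wt_tail' (N : nat) : \sum_(0 <= x < N) wt X (Posz x.+1) <= 2 / c.
Proof.
apply: le_trans (wt_tail N) _; rewrite lerBlDr lerDl.
by rewrite divr_ge0 // mulr_ge0 ?ltW.
Qed.

Lemma wt_sum N : \sum_(m <- rng N) wt X m <= 1 + 4 / c.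
Proof.
rewrite /rng big_cat !big_map.
rewrite -[iota 0 N.+1]/(index_iota 0 N.+1) big_nat_recl //.
have e : iota 0 N = index_iota 0 N by rewrite /index_iota subn0.
rewrite e.
rewrite [Y in _ + Y <= _](eq_bigr (fun j => wt X (Posz j.+1))); last by move=> j _; rewrite wt_neg.
have -> : wt X (Posz 0) = 1 by rewrite wt_nat mulr0n expr0n /= mulr0 addr0 invr1.
have := wt_tail' N.
have -> : 4 / c = 2 / c + 2 / c by field; rewrite gt_eqF.
move=> hh /=; rewrite -addrA lerD2l; exact: (lerD hh hh).
Qed.

End Weights.

Lemma sum_sub_le (R : realDomainType) (T : eqType) (s t : seq T) (F : T -> R) :
  uniq s -> uniq t -> {subset s <= t} -> (forall x, 0 <= F x) ->
  \sum_(x <- s) F x <= \sum_(x <- t) F x.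
Proof.
move=> us ut st F0.
rewrite [leRHS](bigID (fun x => x \in s)) /=.
have -> : \sum_(x <- t | x \in s) F x = \sum_(x <- s) F x.
  rewrite -big_filter; apply: perm_big; apply: uniq_perm.
  - exact: filter_uniq.
  - exact: us.
  - by move=> x; rewrite mem_filter; case xs: (x \in s) => //=; apply: st.
by rewrite lerDl sumr_ge0.
Qed.

Definition Bm (R : realType) (n : nat) (A0 : R -> 'M[R[i]]_n) (lam : R[i]) :=
  fun x => A0 x + (1 - lam)%:M.

Unset Implicit Arguments. Set Strict Implicit.

Theorem lemma3p1 (R : realType) (X : R) (n : nat) (A0 A1 : R -> 'M[R[i]]_n)
    (lam : R[i]) :
  0 < X -> (1 <= n)%N -> L2per_mx X A0 -> L2per_mx X A1 ->
  K_hilbert_schmidt X lam A0 A1.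
Proof.
move=> hX _ [_ LA0] [_ LA1].
pose B := Bm A0 lam.
have L1r l i : L2 X (fun x => complex.Re (A1 x l i)) := (L2_of_on (LA1 l i)).1.
have L1i l i : L2 X (fun x => complex.Im (A1 x l i)) := (L2_of_on (LA1 l i)).2.
have L0r l i : L2 X (fun x => complex.Re (B x l i)).
  have -> : (fun x => complex.Re (B x l i)) =
      fun x => complex.Re (A0 x l i) + complex.Re ((1 - lam)%:M l i).
    apply/funext => x; rewrite /B /Bm mxE.
    by case: (A0 x l i) => ? ?; case: ((1 - lam)%:M l i) => ? ?.
  exact: L2_add (L2_of_on (LA0 l i)).1 (L2_cst hX _).
have L0i l i : L2 X (fun x => complex.Im (B x l i)).
  have -> : (fun x => complex.Im (B x l i)) =
      fun x => complex.Im (A0 x l i) + complex.Im ((1 - lam)%:M l i).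
    apply/funext => x; rewrite /B /Bm mxE.
    by case: (A0 x l i) => ? ?; case: ((1 - lam)%:M l i) => ? ?.
  exact: L2_add (L2_of_on (LA0 l i)).2 (L2_cst hX _).
pose a1 l i := fun x => complex.Re (A1 x l i).
pose b1 l i := fun x => complex.Im (A1 x l i).
pose a0 l i := fun x => complex.Re (B x l i).
pose b0 l i := fun x => complex.Im (B x l i).
pose H l i d := Pc X (a1 l i) (b1 l i) d ^+ 2 + Qc X (a1 l i) (b1 l i) d ^+ 2 +
  (Pc X (a0 l i) (b0 l i) d ^+ 2 + Qc X (a0 l i) (b0 l i) d ^+ 2).
pose G l i := X * II X (fun x => a1 l i x ^+ 2 + b1 l i x ^+ 2) +
  X * II X (fun x => a0 l i x ^+ 2 + b0 l i x ^+ 2).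
have HB l i r : uniq r -> \sum_(d <- r) H l i d <= G l i.
  move=> ur; rewrite big_split /=; apply: lerD.
    exact (bessel hX (L1r l i) (L1i l i) ur).
  exact (bessel hX (L0r l i) (L0i l i) ur).
have G0 l i : 0 <= G l i by have := HB l i [::] isT; rewrite big_nil.
pose kap := 2 * (X^-1) ^+ 2.
have kap0 : 0 <= kap by rewrite /kap mulr_ge0 ?sqr_ge0.
have TB k i m l : csqnorm (Kcoef X lam A0 A1 (fmode X k i) m l) <= kap * wt X m * H l i (m - k).
  change (csqnorm (sym1 X m * cinner X (fun x => A1 x *m fmode X k i x) (fmode X m l) +
     sym0 X m * cinner X (fun x => B x *m fmode X k i x) (fmode X m l)) <=
     kap * wt X m * H l i (m - k)).
  rewrite (cinner_fmode hX k m (L1r l i) (L1i l i)).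
  rewrite (cinner_fmode hX k m (L0r l i) (L0i l i)).
  apply: le_trans (csq_bound _ _ _ _ (csq_sym1 X m) (csq_sym0 X m)) _.
  by rewrite le_eqVlt; apply/orP; left; apply/eqP; rewrite /H /kap; ring.
pose W := 1 + 4 / (2 * pi / X) ^+ 2.
pose M := \sum_(i <- enum 'I_n) \sum_(l <- enum 'I_n) (kap * W * G l i).
rewrite /K_hilbert_schmidt.
apply: (@le_lt_trans _ _ M%:E); last exact: ltry.
apply: ge_ereal_sup => _ [A [finA _] <-].
have [s Es] := (finite_seqP A).1 finA.
have -> : A = [set` undup s].
  by rewrite Es; apply/seteqP; split => x /=; rewrite mem_undup.
rewrite -fsbig_seq ?undup_uniq // sumEFin lee_fin.
set t := undup s.
have ut : uniq t by exact: undup_uniq.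
set N := \max_(p <- t) maxn `|p.1.1| `|p.2.1|.
set Qs := [seq (k, i) | k <- rng N, i <- enum 'I_n].
set box := [seq (p, q) | p <- Qs, q <- Qs].
have uQs : uniq Qs.
  apply: allpairs_uniq; [exact: rng_uniq | exact: enum_uniq |].
  by move=> [? ?] [? ?] _ _ /= [-> ->].
have ubox : uniq box.
  apply: allpairs_uniq => //.
  by move=> [? ?] [? ?] _ _ /= [-> ->].
have sub : {subset t <= box}.
  move=> [[k i] [m l]] pt.
  have hN := leq_bigmax_seq (P := xpredT) (F := fun p : (int * 'I_n) * (int * 'I_n) => maxn `|p.1.1| `|p.2.1|) _ pt isT.
  apply: allpairs_f; apply: allpairs_f; rewrite ?mem_enum //; apply: rng_mem.
  - exact: leq_trans (leq_maxl _ _) hN.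
  - exact: leq_trans (leq_maxr _ _) hN.
apply: le_trans (sum_sub_le ut ubox sub (fun p => csq_ge0 _)) _.
rewrite big_allpairs big_allpairs.
under eq_bigr => k _ do under eq_bigr => i _ do rewrite big_allpairs.
apply: (@le_trans _ _ (\sum_(k <- rng N) \sum_(i <- enum 'I_n) \sum_(m <- rng N)
   \sum_(l <- enum 'I_n) (kap * wt X m * H l i (m - k)))).
  apply: ler_sum => k _; apply: ler_sum => i _; apply: ler_sum => m _; apply: ler_sum => l _.
  exact: TB.
rewrite exchange_big; apply: ler_sum => i _.
under eq_bigr => k _ do rewrite exchange_big.
rewrite exchange_big; apply: ler_sum => l _.
rewrite exchange_big.
under eq_bigr => m _ do rewrite -mulr_sumr.
apply: (@le_trans _ _ (\sum_(m <- rng N) kap * wt X m * G l i)).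
  apply: ler_sum => m _; apply: ler_wpM2l; first by rewrite mulr_ge0 ?wt_ge0.
  rewrite -(big_map (fun k => m - k) xpredT (H l i)); apply: HB.
  by rewrite map_inj_uniq ?rng_uniq // => x y /addrI /oppr_inj.
rewrite -big_distrl /= -big_distrr /=.
apply: ler_wpM2r; first exact: G0.
apply: ler_wpM2l => //; exact: wt_sum.
Qed.
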